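(* Let $\lambda>0$, $t>0$ and $n\ge 2$. Consider a Yule tree with rate $\lambda$ whose initial bifurcation occurred time $t$ before the present, conditioned on having exactly $n$ leaves at the present. Let $TL_n(t)$ be the sum of all its edge lengths and $L_n(t)=\mathbb{E}[TL_n(t)]$. Then $$L_n(t)=2t+\frac{n-2}{\lambda}\bigl(1-y(\lambda t)\bigr),\qquad y(x):=\frac{x e^{-x}}{1-e^{-x}},$$ and $y$ is strictly decreasing on $(0,\infty)$ with $\lim_{x\to 0^+}y(x)=1$ and $\lim_{x\to\infty}y(x)=0$. *)

(* Defs.v *)
From Stdlib Require Import Reals Lra ClassicalEpsilon.
Open Scope R_scope.

(* Total Riemann integral: the Stdlib Riemann integral of f on [a,b] when f is
   Riemann integrable there, and 0 otherwise (the value does not depend on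
   the integrability proof, by RiemannInt_P5). *)
Definition Rint (f : R -> R) (a b : R) : R :=
  match excluded_middle_informative (inhabited (Riemann_integrable f a b)) with
  | left h => RiemannInt (epsilon h (fun _ => True))
  | right _ => 0
  end.

(* The Yule process of rate lam: a pure-birth process in which, while there
   are k lineages, each lineage splits at rate lam, i.e. the waiting time to
   the next bifurcation is Exp(k*lam) and the count goes k -> k+1.
   For a Yule tree, the total edge length accumulated during a time interval
   is the integral of the number of lineages over that interval.

   yule_PM lam n j s = (P, M), where, starting with k = n - j lineages and
   running the process for time s,
     P = Prob(exactly n lineages at the end),
     M = E[(total edge length accumulated) ; exactly n lineages at the end].
   Defined by first-jump decomposition. *)
Fixpoint yule_PM (lam : R) (n : nat) (j : nat) (s : R) : R * R :=
  match j with
  | O => (exp (- (INR n * lam * s)), INR n * s * exp (- (INR n * lam * s)))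
  | S j' =>
      let k := INR (n - S j') in
      (Rint (fun u => k * lam * exp (- (k * lam * u)) *
                      fst (yule_PM lam n j' (s - u))) 0 s,
       Rint (fun u => k * lam * exp (- (k * lam * u)) *
                      (k * u * fst (yule_PM lam n j' (s - u))
                       + snd (yule_PM lam n j' (s - u)))) 0 s)
  end.

(* L_n(t): expected total edge length of a rate-lam Yule tree whose initial
   bifurcation occurred time t before the present (so 2 lineages at time 0),
   conditioned on having exactly n leaves at the present:
   E[TL ; N_t = n] / P(N_t = n). *)
Definition yule_expected_length (lam : R) (n : nat) (t : R) : R :=
  snd (yule_PM lam n (n - 2) t) / fst (yule_PM lam n (n - 2) t).

Definition yfun (x : R) : R := x * exp (- x) / (1 - exp (- x)).

(* Main.v *)
Require Import Defs.
From Stdlib Require Import Reals Lra Lia ClassicalEpsilon FunctionalExtensionality.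
Open Scope R_scope.

Lemma Rint_FTC (F f : R -> R) (a b : R) :
  (forall x, derivable_pt_lim F x (f x)) -> continuity f -> Rint f a b = F b - F a.
Proof.
  intros HD Hc.
  set (diff := fun x => exist (fun l => derivable_pt_lim F x l) (f x) (HD x) : derivable_pt F x).
  set (C := {| c1 := F; diff0 := diff; cont1 := Hc |}).
  assert (pr : Riemann_integrable f a b).
  { destruct (Rle_dec a b).
    - apply continuity_implies_RiemannInt; auto.
    - apply RiemannInt_P1, continuity_implies_RiemannInt; [lra|auto]. }
  unfold Rint. destruct (excluded_middle_informative _) as [h|h].
  - rewrite (RiemannInt_P5 _ pr).
    exact (@FTC_Riemann C a b pr).
  - exfalso; apply h; constructor; exact pr.
Qed.

Lemma D_mult f g x l1 l2 : derivable_pt_lim f x l1 -> derivable_pt_lim g x l2 ->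
  derivable_pt_lim (fun y => f y * g y) x (l1 * g x + f x * l2).
Proof. intros; apply (derivable_pt_lim_mult f g); auto. Qed.
Lemma D_plus f g x l1 l2 : derivable_pt_lim f x l1 -> derivable_pt_lim g x l2 ->
  derivable_pt_lim (fun y => f y + g y) x (l1 + l2).
Proof. intros; apply (derivable_pt_lim_plus f g); auto. Qed.
Lemma D_minus f g x l1 l2 : derivable_pt_lim f x l1 -> derivable_pt_lim g x l2 ->
  derivable_pt_lim (fun y => f y - g y) x (l1 - l2).
Proof. intros; apply (derivable_pt_lim_minus f g); auto. Qed.
Lemma D_opp f x l : derivable_pt_lim f x l -> derivable_pt_lim (fun y => - f y) x (- l).
Proof. intros; apply (derivable_pt_lim_opp f); auto. Qed.
Lemma D_const c x : derivable_pt_lim (fun _ => c) x 0.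
Proof. apply derivable_pt_lim_const. Qed.
Lemma D_id x : derivable_pt_lim (fun y => y) x 1.
Proof. apply derivable_pt_lim_id. Qed.
Lemma D_exp f x l : derivable_pt_lim f x l -> derivable_pt_lim (fun y => exp (f y)) x (exp (f x) * l).
Proof. intros; apply (derivable_pt_lim_comp f exp); auto; apply derivable_pt_lim_exp. Qed.
Lemma D_pow f x l m : derivable_pt_lim f x l -> derivable_pt_lim (fun y => f y ^ m) x (INR m * f x ^ pred m * l).
Proof. intros; apply (derivable_pt_lim_comp f (fun y => y ^ m)); auto; apply derivable_pt_lim_pow. Qed.
Lemma D_eq f x l l' : derivable_pt_lim f x l -> l = l' -> derivable_pt_lim f x l'.
Proof. intros; subst; auto. Qed.

Ltac dtac := repeat first [ apply D_pow | apply D_exp | apply D_mult | apply D_plus | apply D_minus | apply D_opp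
   | apply D_id | apply D_const ].
Lemma Rint_ext f g a b : (forall x, f x = g x) -> Rint f a b = Rint g a b.
Proof.
  intros H. assert (f = g) by (extensionality x; apply H). now subst.
Qed.

Section Closed.
Variables (lam : R) (n : nat).
Hypothesis Hlam : 0 < lam.

Fixpoint cc (j : nat) : R :=
  match j with O => 1 | S j' => cc j' * INR (n - S j') / INR (S j') end.

Definition Pc (j : nat) (s : R) : R :=
  cc j * exp (- (INR (n - j) * lam * s)) * (1 - exp (- (lam * s))) ^ j.
Definition Mc (j : nat) (s : R) : R :=
  cc j * (exp (- (INR (n - j) * lam * s)) * (1 - exp (- (lam * s))) ^ j * (INR (n - j) * s + INR j / lam)
   - INR j * s * exp (- (INR (n - j) * lam * s)) * exp (- (lam * s)) * (1 - exp (- (lam * s))) ^ pred j).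

Lemma exp_comb k s u :
  exp (- ((k + 1) * lam * (s - u))) = exp (- (k * lam * s)) * exp (- (lam * (s - u))) * / exp (- (k * lam * u)).
Proof.
  rewrite <- exp_Ropp, <- !exp_plus. f_equal. ring.
Qed.

Lemma closed_form : forall j, (j <= n)%nat -> forall s, yule_PM lam n j s = (Pc j s, Mc j s).
Proof.
  induction j as [|j IH]; intros Hj s.
  - simpl. unfold Pc, Mc. simpl. rewrite Nat.sub_0_r. f_equal; field; lra.
  - cbn [yule_PM].
    assert (Hk1 : INR (n - j) = INR (n - S j) + 1).
    { replace (n - j)%nat with (S (n - S j)) by lia. apply S_INR. }
    set (k := INR (n - S j)) in *.
    rewrite (Rint_ext _ (fun u => k * lam * exp (- (k * lam * u)) * Pc j (s - u)))
      by (intros u; rewrite IH by lia; reflexivity).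
    rewrite (Rint_ext (fun u => k * lam * exp (- (k * lam * u)) * (k * u * fst (yule_PM lam n j (s - u)) + snd (yule_PM lam n j (s - u))))
         (fun u => k * lam * exp (- (k * lam * u)) * (k * u * Pc j (s - u) + Mc j (s - u))))
      by (intros u; rewrite IH by lia; reflexivity).
    f_equal.
    + rewrite (Rint_FTC (fun u => - (cc j * k / INR (S j)) * exp (- (k * lam * s)) * (1 - exp (- (lam * (s - u)))) ^ S j)).
      * unfold Pc. replace (s - s) with 0 by ring. replace (s - 0) with s by ring.
        rewrite Rmult_0_r, Ropp_0, exp_0. cbn [cc].
        replace (n - S j)%nat with (n - S j)%nat by reflexivity. fold k.
        rewrite Rminus_diag. simpl pow. rewrite Rmult_0_l.
        assert (INR (S j) <> 0) by (apply not_0_INR; lia). field; auto.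
      * intros u. eapply D_eq. { dtac. }
        unfold Pc. rewrite Hk1, exp_comb.
        assert (INR (S j) <> 0) by (apply not_0_INR; lia).
        assert (exp (- (k * lam * u)) <> 0) by (apply Rgt_not_eq, exp_pos).
        cbn [pred]. rewrite S_INR in *. field; auto.
      * unfold Pc; reg.
    + rewrite (Rint_FTC (fun u => cc j * k * exp (- (k * lam * s)) *
          ((u - (k + INR (S j)) * s / INR (S j) - 1 / lam) * (1 - exp (- (lam * (s - u)))) ^ S j
           + (s - u) * (1 - exp (- (lam * (s - u)))) ^ j))).
      * unfold Mc. replace (s - s) with 0 by ring. replace (s - 0) with s by ring.
        rewrite Rmult_0_r, Ropp_0, exp_0. cbn [cc pred].
        fold k.
        rewrite Rminus_diag. simpl pow. rewrite !Rmult_0_l.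
        assert (INR (S j) <> 0) by (apply not_0_INR; lia). assert (lam <> 0) by lra. field; auto.
      * intros u. eapply D_eq. { dtac. }
        unfold Pc, Mc. rewrite Hk1, exp_comb.
        assert (INR (S j) <> 0) by (apply not_0_INR; lia).
        assert (exp (- (k * lam * u)) <> 0) by (apply Rgt_not_eq, exp_pos).
        assert (lam <> 0) by lra.
        destruct j as [|m]; cbn [pred pow]; rewrite ?S_INR in *; simpl INR in *.
        -- field; auto.
        -- field; auto.
      * unfold Pc, Mc; reg.
Qed.
End Closed.
Lemma cc_nz (lam : R) n : forall j, (j < n)%nat -> cc n j <> 0.
Proof.
  induction j as [|j IH]; intros Hj; cbn [cc]; [lra|].
  assert (INR (n - S j) <> 0) by (apply not_0_INR; lia).
  assert (INR (S j) <> 0) by (apply not_0_INR; lia).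
  unfold Rdiv. apply Rmult_integral_contrapositive_currified; [|apply Rinv_neq_0_compat; auto].
  apply Rmult_integral_contrapositive_currified; auto. apply IH; lia.
Qed.

Definition hfun (x : R) : R := x / (exp x - 1).

Lemma exp_gt1 x : 0 < x -> 1 < exp x.
Proof. intros; pose proof (exp_ineq1 x ltac:(lra)); lra. Qed.

Lemma yfun_h x : 0 < x -> yfun x = hfun x.
Proof.
  intros Hx. unfold yfun, hfun. pose proof (exp_gt1 x Hx).
  rewrite exp_Ropp. assert (exp x <> 0) by lra.
  field. split; [lra|]. intro Hc. apply Rmult_eq_compat_r with (r := exp x) in Hc.
  field_simplify in Hc. simpl in Hc. nra.
Qed.

Lemma h_bounds x : 0 < x -> 1 - x <= hfun x <= 1 /\ 0 < hfun x.
Proof.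
  intros Hx. pose proof (exp_gt1 x Hx). unfold hfun.
  set (D := exp x - 1). assert (HD : 0 < D) by (unfold D; lra).
  set (y := x / D). assert (Hy : x = y * D) by (unfold y; field; lra).
  pose proof (exp_ineq1_le x) as H1. pose proof (exp_ineq1_le (-x)) as H2.
  assert (H3 : exp (-x) * exp x = 1) by (rewrite <- exp_plus; replace (-x + x) with 0 by ring; apply exp_0).
  assert (H4 : (1 - x) * exp x <= 1) by nra.
  assert (0 < y). { unfold y. apply Rdiv_lt_0_compat; lra. }
  assert (E1' : (1 - x - y) * D = (1 - x) * exp x - 1)
    by (replace ((1-x-y)*D) with ((1-x)*D - y*D) by ring; rewrite <- Hy; unfold D; ring).
  assert (E1 : (1 - x - y) * D <= 0) by lra.
  assert (E2' : (y - 1) * D = x - D)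
    by (replace ((y-1)*D) with (y*D - D) by ring; rewrite <- Hy; ring).
  assert (E2 : (y - 1) * D <= 0) by (rewrite E2'; unfold D; lra).
  split; [split|]; auto.
  - destruct (Rle_dec (1 - x) y); auto. assert (0 < (1 - x - y) * D) by (apply Rmult_lt_0_compat; lra). lra.
  - destruct (Rle_dec y 1); auto. assert (0 < (y - 1) * D) by (apply Rmult_lt_0_compat; lra). lra.
Qed.

Lemma h_large x : 0 < x -> hfun x * x <= 4.
Proof.
  intros Hx. pose proof (h_bounds x Hx) as [_ Hp]. unfold hfun in *.
  pose proof (exp_gt1 x Hx).
  set (D := exp x - 1) in *. assert (HD : 0 < D) by (unfold D; lra).
  set (y := x / D) in *. assert (Hy : x = y * D) by (unfold y; field; lra).
  assert (He : exp x = exp (x/2) * exp (x/2)) by (rewrite <- exp_plus; f_equal; field).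
  pose proof (exp_ineq1_le (x/2)).
  assert (HD2 : x * x / 4 <= D) by (unfold D; rewrite He; nra).
  nra.
Qed.

Lemma yfun_decr a b : 0 < a -> a < b -> yfun b < yfun a.
Proof.
  intros Ha Hab. rewrite !yfun_h by lra.
  destruct (MVT_cor2 hfun (fun x => ((exp x - 1) - x * exp x) / Rsqr (exp x - 1)) a b Hab) as [c [Hc Hc2]].
  - intros c Hc. pose proof (exp_gt1 c ltac:(lra)).
    unfold hfun. eapply D_eq.
    + apply (derivable_pt_lim_div (fun x => x) (fun x => exp x - 1)).
      * apply D_id.
      * apply D_minus; [apply derivable_pt_lim_exp | apply D_const].
      * lra.
    + unfold Rsqr. field. lra.
  - assert (((exp c - 1) - c * exp c) / Rsqr (exp c - 1) < 0).
    { pose proof (exp_gt1 c ltac:(lra)). apply Rdiv_neg_pos.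
      2: { unfold Rsqr; nra. }
      pose proof (exp_ineq1 (-c) ltac:(lra)).
      assert (H3 : exp (-c) * exp c = 1) by (rewrite <- exp_plus; replace (-c + c) with 0 by ring; apply exp_0).
      nra. }
    nra.
Qed.

Theorem theorem2 (lam t : R) (n : nat) (Hlam : 0 < lam) (Ht : 0 < t) (Hn : (2 <= n)%nat) :
  yule_expected_length lam n t = 2 * t + INR (n - 2) / lam * (1 - yfun (lam * t))
  /\ (forall a b : R, 0 < a -> a < b -> yfun b < yfun a)
  /\ limit1_in yfun (fun x => 0 < x) 1 0
  /\ (forall eps : R, 0 < eps -> exists M : R, forall x : R, M < x -> Rabs (yfun x) < eps).
Proof.
  split; [|split; [|split]].
  - unfold yule_expected_length. rewrite closed_form by (auto; lia). cbn [fst snd].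
    pose proof (cc_nz lam n (n - 2) ltac:(lia)) as Hc.
    unfold Pc, Mc. replace (n - (n - 2))%nat with 2%nat by lia.
    unfold yfun.
    pose proof (exp_gt1 (lam * t) ltac:(nra)) as Hg.
    assert (Hq : exp (- (lam * t)) < 1).
    { rewrite <- exp_0. apply exp_increasing. nra. }
    pose proof (exp_pos (- (lam * t))).
    pose proof (exp_pos (- (INR 2 * lam * t))).
    assert (lam <> 0) by lra.
    replace (INR 2) with 2 in * by (simpl; ring).
    destruct (n - 2)%nat as [|m].
    + cbn [pow INR pred]. field. repeat split; lra.
    + cbn [pred pow]. assert (Hp : (1 - exp (- (lam * t))) ^ m <> 0) by (apply pow_nonzero; lra).
      field. repeat split; lra.
  - exact yfun_decr.
  - unfold limit1_in, limit_in. intros eps Heps. exists eps. split; [lra|].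
    intros x [Hx Hd]. simpl in *. unfold R_dist in *.
    rewrite Rminus_0_r, Rabs_pos_eq in Hd by lra.
    rewrite yfun_h by auto. pose proof (h_bounds x Hx).
    apply Rabs_def1; lra.
  - intros eps Heps. exists (4 / eps). intros x Hx.
    assert (0 < 4 / eps) by (apply Rdiv_lt_0_compat; lra).
    assert (Hx0 : 0 < x) by lra.
    rewrite yfun_h by auto. pose proof (h_bounds x Hx0). pose proof (h_large x Hx0).
    assert (eps * x > 4). { apply Rmult_lt_compat_l with (r := eps) in Hx; auto.
      replace (eps * (4 / eps)) with 4 in Hx by (field; lra). lra. }
    rewrite Rabs_pos_eq by lra. nra.
Qed.
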